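(* Let $(a_n)_{n\ge1}$ be a bounded relative convex real sequence, and suppose there exists $(t_n)_{n\ge1}\in T_a$ with $\liminf_{n\to\infty}\Delta t_n>0$. Then $$n\,\frac{\Delta a_n}{\Delta t_n}\to0\quad (n\to\infty),$$ and the series $\sum_{n\ge1} n\,\Delta\!\left(\frac{\Delta a_n}{\Delta t_n}\right)$ converges.
   Context: For a real sequence $(x_i)$, $\Delta x_i=x_{i+1}-x_i$ (applied also to the sequence $x_n=\Delta a_n/\Delta t_n$). ''Increasing'' means strictly increasing. For a real sequence $a=(a_i)_{i\ge1}$, $T_a$ denotes the set of increasing real sequences $(t_i)_{i\ge1}$ such that $(\Delta a_i/\Delta t_i)_{i\ge1}$ is non-decreasing; $a$ is relative convex if $T_a\neq\emptyset$. *)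

(* Defs.v *)
(* R : realType. Sequences are nat -> R; only indices >= 1 matter. *)
From HB Require Import structures.
From mathcomp Require Import all_boot all_order all_algebra.
From mathcomp Require Import all_classical all_reals all_analysis.
Set Implicit Arguments. Unset Strict Implicit. Unset Printing Implicit Defensive.
Import Order.TTheory GRing.Theory Num.Theory.
Local Open Scope ring_scope.

Definition fdiff (R : realType) (x : R ^nat) : R ^nat := fun i => x i.+1 - x i.

Definition dquot (R : realType) (a t : R ^nat) : R ^nat :=
  fun n => fdiff a n / fdiff t n.

Definition in_Ta (R : realType) (a t : R ^nat) : Prop :=
  (forall i, (1 <= i)%N -> t i < t i.+1) /\
  (forall i, (1 <= i)%N -> dquot a t i <= dquot a t i.+1).

Definition relative_convex (R : realType) (a : R ^nat) : Prop :=
  exists t : R ^nat, in_Ta a t.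

Definition bounded_seq (R : realType) (a : R ^nat) : Prop :=
  exists M : R, forall n, (1 <= n)%N -> `|a n| <= M.

(* Main.v *)
Require Import Defs.
From HB Require Import structures.
From mathcomp Require Import all_boot all_order all_algebra.
From mathcomp Require Import all_classical all_reals all_analysis.
From mathcomp Require Import ring lra zify.
Import Order.TTheory GRing.Theory Num.Theory.
Import numFieldNormedType.Exports.
Local Open Scope classical_set_scope.
Local Open Scope ring_scope.
Lemma liminf_pos (R : realType) (u : R ^nat) :
  (0 < limn_einf (fun n => (u n)%:E))%E ->
  exists c : R, exists N, 0 < c /\ forall k, (N <= k)%N -> c <= u k.
Proof.
rewrite limn_einf_lim (cvg_lim _ (@cvg_einfs_sup _ _))//.
move=> /ereal_sup_gt[_ [n _ <-]] hn.
have hle : forall k, (n <= k)%N -> (einfs (fun n => (u n)%:E) n <= (u k)%:E)%E.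
  by move=> k nk; apply: ereal_inf_lbound; exists k.
have := hle n (leqnn n).
move: hn hle; case: (einfs _ n) => [r| |] //= r0 hle _.
exists r, n; split; first by rewrite -lte_fin.
by move=> k nk; rewrite -lee_fin; apply: hle.
Qed.
Lemma unif_c (R : realType) (f : R ^nat) :
  (forall j, (1 <= j)%N -> 0 < f j) ->
  forall N c, 0 < c -> (forall k, (N <= k)%N -> c <= f k) ->
  exists c, 0 < c /\ forall k, (1 <= k)%N -> c <= f k.
Proof.
move=> fpos; elim=> [|N IH] c c0 hc.
  by exists c; split => // k _; apply: hc.
have [N0|Npos] := posnP N.
  by exists c; split => // k k1; apply: hc; rewrite N0.
apply: (IH (Num.min c (f N))).
  by rewrite lt_min c0 fpos.
move=> k; rewrite leq_eqVlt => /orP[/eqP<-|Nk].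
  by rewrite ge_min lexx orbT.
by rewrite ge_min hc.
Qed.

Lemma mono_d (R : realType) (d : R ^nat) :
  (forall i, (1 <= i)%N -> d i <= d i.+1) ->
  forall m k, (1 <= m)%N -> (m <= k)%N -> d m <= d k.
Proof.
move=> hd m; elim=> [|k IH] m1 mk; first by move: (leq_trans m1 mk).
move: mk; rewrite leq_eqVlt => /orP[/eqP->//|mk].
exact: le_trans (IH m1 mk) (hd k (leq_trans m1 mk)).
Qed.

Lemma tele_lower (R : realType) (a : R ^nat) (m : nat) (delta : R) :
  (forall k, (m <= k)%N -> delta <= fdiff a k) ->
  forall K, K%:R * delta <= a (m + K)%N - a m.
Proof.
move=> h; elim=> [|K IH]; first by rewrite mul0r addn0 subrr.
have := h (m + K)%N (leq_addr _ _); rewrite /fdiff addnS -natr1.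
move: IH; set x := a (m + K)%N; set y := a (m + K).+1; lra.
Qed.

Theorem proposition3p5 (R : realType) (a t : R ^nat) :
  bounded_seq a -> relative_convex a -> in_Ta a t ->
  (0 < limn_einf (fun n => (fdiff t n)%:E))%E ->
  (fun n => n%:R * dquot a t n) @ \oo --> (0 : R) /\
  cvg (series (fun n => n%:R * fdiff (dquot a t) n) @ \oo).
Proof.
move=> [M hM] _ [tinc dmon] /liminf_pos [c0 [N0 [c00 hc0]]].
have fpos : forall j, (1 <= j)%N -> 0 < fdiff t j.
  by move=> j j1; rewrite /fdiff subr_gt0; apply: tinc.
have [c [cpos hc]] := @unif_c R _ fpos _ _ c00 hc0.
set d := dquot a t.
have fa : forall k, (1 <= k)%N -> fdiff a k = d k * fdiff t k.
  move=> k k1; rewrite /d /dquot divfK //; exact: lt0r_neq0 (fpos k k1).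
have mono := @mono_d R d dmon.
have dle0 : forall m, (1 <= m)%N -> d m <= 0.
  move=> m m1; rewrite leNgt; apply/negP => dm.
  set delta := d m * c.
  have delta0 : 0 < delta by rewrite mulr_gt0.
  have hk : forall k, (m <= k)%N -> delta <= fdiff a k.
    move=> k mk; have k1 := leq_trans m1 mk.
    rewrite fa // /delta; apply: ler_pM; [exact: ltW|exact: ltW|exact: mono|exact: hc].
  set K := (Num.truncn (2 * M / delta)).+1.
  have := @tele_lower R a m delta hk K.
  have hK : 2 * M < K%:R * delta.
    by rewrite -ltr_pdivrMr //; exact: truncnS_gt.
  have h1 := hM (m + K)%N (leq_trans m1 (leq_addr _ _)).
  have h2 := hM m m1.
  move: h1 h2; rewrite !ler_norml => /andP[h1 h1'] /andP[h2 h2'].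
  lra.
pose D N := \sum_(0 <= j < N) - d j.+1.
have Dtel : forall N, c * D N <= a 1%N - a N.+1.
  elim=> [|N IH]; first by rewrite /D big_geq // mulr0 subrr.
  rewrite /D big_nat_recr //= -/(D N).
  have := fa N.+1 erefl; have := hc N.+1 erefl; have := dle0 N.+1 erefl.
  rewrite /fdiff; move: IH.
  set x := D N; set y := d N.+1; set z := t N.+2 - t N.+1.
  set u := a N.+1; set v := a N.+2.
  nra.
have Dbd : forall N, D N <= 2 * M / c.
  move=> N; rewrite ler_pdivlMr // mulrC.
  apply: le_trans (Dtel N) _.
  have h1 := hM 1%N erefl; have h2 := hM N.+1 erefl.
  move: h1 h2; rewrite !ler_norml => /andP[h1 h1'] /andP[h2 h2'].
  lra.
have Dinc : {homo D : n m / (n <= m)%N >-> n <= m}.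
  apply: nondecreasing_series => n _ _.
  by rewrite oppr_ge0; apply: dle0.
have Dcvg : cvgn D.
  apply: nondecreasing_is_cvgn => //.
  by exists (2 * M / c) => _ [n _ <-]; apply: Dbd.
have DleL := nondecreasing_cvgn_le Dinc Dcvg.
have Pid : forall N, series (fun n => n%:R * fdiff d n) N = N%:R * d N + D N.
  elim=> [|N IH]; first by rewrite /series /= big_geq // /D big_geq // mul0r addr0.
  rewrite /series /= big_nat_recr //=; move: IH; rewrite /series /= => ->; rewrite /D big_nat_recr //=.
  rewrite -/(D N) /fdiff -addn1 natrD; ring.
split; last first.
  apply: nondecreasing_is_cvgn.
    apply: nondecreasing_series => n _ _.
    case: n => [|n]; first by rewrite mul0r.
    by apply: mulr_ge0 => //; rewrite /fdiff subr_ge0; apply: dmon.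
  exists (2 * M / c) => _ [n _ <-]; rewrite Pid.
  apply: le_trans (Dbd n); rewrite gerDr.
  case: n => [|n]; first by rewrite mul0r.
  by rewrite mulr_ge0_le0 // dle0.
have key : forall n, (1 <= n)%N -> - (n%:R * d n) <= 2 * (D n - D n./2).
  move=> n n1.
  have h2 : (n./2 <= n)%N by rewrite -divn2 leq_div.
  have -> : D n - D n./2 = \sum_(n./2 <= j < n) - d j.+1.
    by rewrite /D (@big_cat_nat _ _ _ n./2 0 n _ _ (leq0n _) h2) /= addrC addrK.
  have hs : \sum_(n./2 <= j < n) - d n <= \sum_(n./2 <= j < n) - d j.+1.
    apply: ler_sum_nat => j /andP[_ jn]; rewrite lerN2; exact: mono.
  rewrite sumr_const_nat in hs.
  have hn : n%:R <= 2 * (n - n./2)%:R :> R.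
    rewrite -natrM ler_nat.
    have := odd_double_half n; rewrite -!mul2n; lia.
  have dn := dle0 n n1.
  rewrite -mulr_natr in hs.
  move: hs hn; set x := (n - n./2)%:R; set y := \sum_(_ <= _ < _) _.
  set z := n%:R; set w := d n.
  move=> hs hn; have h3 : 0 <= (2 * x - z) * (- w) by apply: mulr_ge0; [rewrite subr_ge0|rewrite oppr_ge0].
  clearbody x y z w; nra.
apply/cvgrPdist_le => e e0.
have /cvgrPdist_le /(_ (e / 2)) := Dcvg.
case; first by rewrite divr_gt0.
move=> N _ hN.
exists (N.*2.+1) => // n /= Nn.
have n1 : (1 <= n)%N by apply: leq_trans Nn.
have hN2 : (N <= n./2)%N.
  have := odd_double_half n; rewrite -!mul2n in Nn *; lia.
have := hN _ hN2; have := DleL n; have := DleL n./2; have := key n n1.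
have := mulr_ge0_le0 (ler0n _ n) (dle0 n n1).
rewrite sub0r normrN ler_norml => ? ? ? ? /=.
rewrite ler_norml => /andP[_ h].
apply/andP; split; lra.
Qed.
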